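(* Let $(\psi_j)_{j\ge1}$ be an orthonormal basis of $\mathbb L^2([0,1])$ consisting of infinitely differentiable functions and $(\lambda_j)_{j\ge1}$ a summable sequence of positive numbers such that: there exists $\varsigma\ge0$ such that for every integer $\ell\ge0$ there is $M_\ell>0$ with $|\partial^\ell\psi_j(u)|\le M_\ell\,j^{\ell+\varsigma}$ for all $j\ge1$, $u\in[0,1]$; and there exist $c,\gamma>0$ with $\lambda_j\le c\,j^{-(\gamma+1)}$ for all $j\ge1$. Let $\alpha:=\gamma-2\varsigma$ and assume $\alpha>0$; let $m:=\max\{k\in\mathbb Z:k<\alpha\}$, $\beta:=\alpha-m$, and $K(s,t)=\sum_{j\ge1}\lambda_j\psi_j(s)\psi_j(t)$. Then: if $\alpha$ is not an integer, $K\in C^{m,\beta}([0,1]^2)$; if $\alpha$ is an integer (so $\beta=1$), $K\in C^{m,\delta}([0,1]^2)$ for every $\delta\in(0,1)$.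
   Context: For $m\in\{0,1,\dots\}$ and $\beta\in(0,1]$, $C^{m,\beta}([0,1]^2)$ is the set of $K\in C^m([0,1]^2)$ for which there is $L>0$ such that for every multi-index $\mathbf v$ with $|\mathbf v|=m$ and all $(s,t),(s',t')\in[0,1]^2$, $|\partial^{\mathbf v}K(s,t)-\partial^{\mathbf v}K(s',t')|\le L\|(s,t)-(s',t')\|^\beta$ (Euclidean norm). *)

(* Defs.v *)
From HB Require Import structures.
From mathcomp Require Import all_boot all_order all_algebra.
From mathcomp Require Import all_classical all_reals all_analysis.
Set Implicit Arguments. Unset Strict Implicit. Unset Printing Implicit Defensive.
Import Order.TTheory GRing.Theory Num.Theory.
Local Open Scope ring_scope.

Section Defs.
Variable R : realType.

Definition in01 (x : R) : Prop := 0 <= x <= 1.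

Definition has_deriv01 (f f' : R -> R) (x : R) : Prop :=
  forall e : R, 0 < e -> exists2 d : R, 0 < d &
    forall h : R, h != 0 -> `|h| < d -> in01 (x + h) ->
      `|(f (x + h) - f x) / h - f' x| <= e.

(* D is the tower of derivatives of f on [0,1]: D 0 = f and D (l+1) = (D l)'
   on [0,1].  Its existence is infinite differentiability on [0,1]. *)
Definition deriv_tower01 (f : R -> R) (D : nat -> R -> R) : Prop :=
  (forall x, in01 x -> D 0%N x = f x) /\
  (forall (l : nat) x, in01 x -> has_deriv01 (D l) (D l.+1) x).

Definition dist2 (s t s' t' : R) : R := Num.sqrt ((s - s') ^+ 2 + (t - t') ^+ 2).

Definition continuous_on_sq (g : R -> R -> R) : Prop :=
  forall s t, in01 s -> in01 t -> forall e : R, 0 < e -> exists2 d : R, 0 < d &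
    forall s' t', in01 s' -> in01 t' -> dist2 s t s' t' < d ->
      `|g s' t' - g s t| < e.

(* K belongs to C^{m,beta}([0,1]^2): D a b plays the role of the partial
   derivative d^a_s d^b_t K; all partials of order <= m exist on the closed
   square (one-sided at the boundary) and are continuous there, and those of
   order exactly m are beta-Hoelder with respect to the Euclidean norm. *)
Definition holder_class (m : nat) (beta : R) (K : R -> R -> R) : Prop :=
  exists D : nat -> nat -> R -> R -> R,
    [/\ (forall s t, in01 s -> in01 t -> D 0%N 0%N s t = K s t),
        (forall a b : nat, (a + b < m)%N -> forall s t, in01 s -> in01 t ->
           has_deriv01 (fun u => D a b u t) (fun u => D a.+1 b u t) s /\
           has_deriv01 (fun v => D a b s v) (fun v => D a b.+1 s v) t),
        (forall a b : nat, (a + b <= m)%N -> continuous_on_sq (D a b)) &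
        exists2 L : R, 0 < L &
          forall a b : nat, (a + b)%N = m ->
            forall s t s' t', in01 s -> in01 t -> in01 s' -> in01 t' ->
              `|D a b s t - D a b s' t'| <= L * (dist2 s t s' t') `^ beta].

End Defs.

(* Main.v *)
From HB Require Import structures.
From mathcomp Require Import all_boot all_order all_algebra.
From mathcomp Require Import all_classical all_reals all_analysis.
From mathcomp Require Import ring lra.
Require Import Defs.
Import Order.TTheory GRing.Theory Num.Theory.
Import numFieldNormedType.Exports.
Local Open Scope classical_set_scope.
Local Open Scope ring_scope.

Section Main.
Variable R : realType.


Lemma pow_anti (x y p : R) : 0 < x -> x <= y -> p <= 0 -> y `^ p <= x `^ p.
Proof.
move=> x0 xy p0.
have y0 : 0 < y by exact: lt_le_trans xy.
have [q -> q0] : exists2 q, p = - q & 0 <= q by exists (- p); rewrite ?opprK ?oppr_ge0.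
rewrite !powRN lef_pV2 ?posrE ?powR_gt0 //.
by apply: (ge0_ler_powR q0) => //; rewrite nnegrE ltW.
Qed.

Lemma pow_mono_exp (x p q : R) : 1 <= x -> p <= q -> x `^ p <= x `^ q.
Proof. by move=> x1 pq; apply: ler_powR. Qed.

Lemma mvt_pow (q a b : R) : 0 < a -> a < b ->
  exists2 c, a < c < b & b `^ q - a `^ q = q * c `^ (q - 1) * (b - a).
Proof.
move=> a0 ab.
have := MVT (f := fun x : R => x `^ q) (df := fun x => q * x `^ (q - 1)) ab.
case.
- move=> x; rewrite in_itv /= => /andP[ax _].
  by apply: is_derive1_powR; exact: lt_trans ax.
- apply: derivable_within_continuous => x; rewrite in_itv /= => /andP[ax _].
  by apply: derivable_powR; rewrite in_itv /= andbT (lt_le_trans a0).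
- move=> c; rewrite in_itv /= => cab ->; by exists c.
Qed.


Lemma ineqA (e : R) (j : nat) : 0 < e ->
  (j.+2%:R : R) `^ (-1 - e) <= ((j.+1%:R : R) `^ (- e) - (j.+2%:R : R) `^ (- e)) / e.
Proof.
move=> e0.
have a0 : (0 : R) < j.+1%:R by rewrite ltr0n.
have ab : (j.+1%:R : R) < j.+2%:R by rewrite ltr_nat.
have [c /andP[ac cb] H] := @mvt_pow (- e) _ _ a0 ab.
have -> : (j.+1%:R : R) `^ (- e) - (j.+2%:R : R) `^ (- e)
        = e * c `^ (-1 - e).
  apply: (@oppr_inj _); rewrite opprB H.
  have -> : (j.+2%:R : R) - j.+1%:R = 1 by rewrite -natrB // subSnn.
  by rewrite mulr1 mulNr; congr (- (_ * _)); congr (_ `^ _); rewrite addrC.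
rewrite [e * _]mulrC mulfK ?gt_eqF //.
apply: pow_anti; [exact: lt_trans ac| exact: ltW|].
by lra.
Qed.

Lemma ineqB (r : R) (j : nat) : 0 < r -> r < 1 ->
  (j.+1%:R : R) `^ (r - 1) <= ((j.+1%:R : R) `^ r - (j%:R : R) `^ r) / r.
Proof.
move=> r0 r1.
case: j => [|j].
  rewrite powR1 powR0 ?gt_eqF // subr0 mul1r.
  by rewrite invf_ge1 // ltW.
have a0 : (0 : R) < j.+1%:R by rewrite ltr0n.
have ab : (j.+1%:R : R) < j.+2%:R by rewrite ltr_nat.
have [c /andP[ac cb] ->] := @mvt_pow r _ _ a0 ab.
have -> : (j.+2%:R : R) - j.+1%:R = 1 by rewrite -natrB // subSnn.
rewrite mulr1 [r * _]mulrC mulfK ?gt_eqF //.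
apply: pow_anti; [exact: lt_trans ac| exact: ltW|].
by lra.
Qed.

Lemma sumF2 (r : R) (n : nat) : 0 < r -> r < 1 ->
  \sum_(1 <= j < n.+1) (j%:R : R) `^ (r - 1) <= (n%:R : R) `^ r / r.
Proof.
move=> r0 r1; elim: n => [|n IH].
  by rewrite big_geq // powR0 ?gt_eqF // mul0r.
rewrite big_nat_recr //=.
apply: le_trans (lerD IH (ineqB r n r0 r1)) _.
by rewrite -mulrDl addrC subrK.
Qed.

Lemma sumF1_aux (e : R) (N n : nat) : 0 < e -> (1 <= N)%N -> (N <= n)%N ->
  \sum_(N <= j < n.+1) (j%:R : R) `^ (-1 - e)
    <= (N%:R : R) `^ (-1 - e) + ((N%:R : R) `^ (- e) - (n%:R : R) `^ (- e)) / e.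
Proof.
move=> e0 N1; elim: n => [|n IH] Nn.
  by move: (leq_trans N1 Nn).
case: (ltngtP N n.+1) Nn => // [Nn _|<- _]; last first.
  by rewrite big_nat1 subrr mul0r addr0.
rewrite big_nat_recr //=; last by rewrite ltnW.
have {}IH := IH Nn.
case: n Nn IH => [|n] Nn IH; first by move: (leq_trans N1 Nn).
apply: le_trans (lerD IH (ineqA e n e0)) _.
by rewrite -addrA -mulrDl addrA subrK.
Qed.

Lemma sumF1 (e : R) (N n : nat) : 0 < e -> (1 <= N)%N ->
  \sum_(N <= j < n) (j%:R : R) `^ (-1 - e) <= (1 + e^-1) * (N%:R : R) `^ (- e).
Proof.
move=> e0 N1.
have hN : 0 <= (N%:R : R) `^ (- e) by apply: powR_ge0.
have bnd : (N%:R : R) `^ (-1 - e) <= (N%:R : R) `^ (- e).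
  by apply: pow_mono_exp; [rewrite ler1n | lra].
case: n => [|n]; first by rewrite big_geq // mulr_ge0 // addr_ge0 // invr_ge0 ltW.
case: (leqP N n) => Nn; last by rewrite big_geq // mulr_ge0 // addr_ge0 // invr_ge0 ltW.
apply: le_trans (@sumF1_aux e N n e0 N1 Nn) _.
rewrite [(1 + _) * _]mulrDl mul1r; apply: lerD => //.
rewrite [_ / e]mulrC ler_wpM2l ?gerBl ?powR_ge0 //.
by rewrite invr_ge0; exact: ltW.
Qed.



Definition psum (u : nat -> R) (n : nat) : R := \sum_(1 <= j < n) u j.

Lemma psum_split (u : nat -> R) N n : (1 <= N)%N -> (N <= n)%N ->
  psum u n - psum u N = \sum_(N <= j < n) u j.
Proof.
by move=> N1 Nn; rewrite /psum (@big_cat_nat _ _ _ N 1 n) //= addrAC subrr add0r.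
Qed.

Lemma lim_bound (f : nat -> R) (a B : R) (N : nat) : cvgn f ->
  (forall n, (N <= n)%N -> `|f n - a| <= B) -> `|limn f - a| <= B.
Proof.
move=> cf H; rewrite ler_norml; apply/andP; split.
- rewrite lerBrDr; apply: limr_ge => //.
  near=> n; have Nn : (N <= n)%N by near: n; exact: nbhs_infty_ge.
  by have := H n Nn; rewrite ler_norml => /andP[+ _]; rewrite lerBrDr.
- rewrite lerBlDr; apply: limr_le => //.
  near=> n; have Nn : (N <= n)%N by near: n; exact: nbhs_infty_ge.
  by have := H n Nn; rewrite ler_norml => /andP[_]; rewrite lerBlDr.
Unshelve. all: by end_near.
Qed.

Lemma G1 (u : nat -> R) (C e : R) : 0 < e ->
  (forall j, (1 <= j)%N -> `|u j| <= C * (j%:R : R) `^ (-1 - e)) ->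
  cvgn (psum u) /\
  (forall N, (1 <= N)%N -> `|limn (psum u) - psum u N| <= C * ((1 + e^-1) * (N%:R : R) `^ (- e))).
Proof.
move=> e0 Hu.
have C0 : 0 <= C.
  have := Hu 1%N isT; rewrite powR1 mulr1 => H.
  exact: le_trans (normr_ge0 _) H.
have T0 : forall N : nat, 0 <= (1 + e^-1) * (N%:R : R) `^ (- e).
  move=> N; apply: mulr_ge0; last exact: powR_ge0.
  by apply: addr_ge0 => //; rewrite invr_ge0; exact: ltW.
have fin : forall N n, (1 <= N)%N -> (N <= n)%N ->
    \sum_(N <= j < n) `|u j| <= C * ((1 + e^-1) * (N%:R : R) `^ (- e)).
  move=> N n N1 Nn.
  apply: le_trans (_ : \sum_(N <= j < n) C * (j%:R : R) `^ (-1 - e) <= _).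
    rewrite big_nat [X in _ <= X]big_nat; apply: ler_sum => j /andP[Nj _].
    by apply: Hu; exact: leq_trans Nj.
  by rewrite -mulr_sumr ler_wpM2l // sumF1.
have cv : cvgn (psum u).
  have : cvgn (series u).
    apply: normed_cvg.
    rewrite -(is_cvg_series_restrict 1).
    apply: nondecreasing_is_cvgn.
      apply/nondecreasing_seqP => n /=.
      case: (leqP 1 n) => n1; last by move: n1; rewrite ltnS leqn0 => /eqP->; rewrite !big_geq.
      by rewrite big_nat_recr //= lerDl.
    exists (C * ((1 + e^-1) * (1%:R : R) `^ (- e))) => _ [n _ <-] /=.
    case: (leqP 1 n) => n1; last by rewrite big_geq ?(ltnW n1) //; exact: mulr_ge0 C0 (T0 1%N).
    exact: fin.
  by rewrite -(is_cvg_series_restrict 1).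
split => // N N1.
apply: (@lim_bound _ _ _ N) => // n Nn.
rewrite psum_split //.
apply: le_trans (ler_norm_sum _ _ _) _.
exact: fin.
Qed.


Lemma psumB (u v : nat -> R) : psum (fun j => u j - v j) = psum u - psum v.
Proof. by apply/funext => n; rewrite /psum sumrB. Qed.

Lemma lim_psumB (u v : nat -> R) : cvgn (psum u) -> cvgn (psum v) ->
  limn (psum (fun j => u j - v j)) = limn (psum u) - limn (psum v).
Proof. by move=> cu cv; rewrite psumB limB. Qed.

Lemma inv_pow (x p : R) : 0 < x -> (x^-1) `^ p = x `^ (- p).
Proof. by move=> x0; rewrite -powR_inv1 ?ltW // -powRrM mulN1r. Qed.

Lemma split_bound (u : nat -> R) (A B r e1 rho : R) : 0 < r -> r < 1 -> 0 < e1 ->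
  1 - r <= e1 -> 0 < rho -> 0 <= B ->
  (forall j, (1 <= j)%N -> `|u j| <= A * (j%:R : R) `^ (-1 - e1)) ->
  (forall j, (1 <= j)%N -> `|u j| <= B * rho * (j%:R : R) `^ (r - 1)) ->
  `|limn (psum u)| <= (B / r + A * (1 + e1^-1)) * rho `^ (1 - r).
Proof.
move=> r0 r1 e0 re rho0 B0 HA HB.
have A0 : 0 <= A.
  have := HA 1%N isT; rewrite powR1 mulr1 => H.
  exact: le_trans (normr_ge0 _) H.
have T0 : 0 <= 1 + e1^-1 by apply: addr_ge0 => //; rewrite invr_ge0; exact: ltW.
have Br0 : 0 <= B / r by apply: divr_ge0 => //; exact: ltW.
have [cv Ht] := @G1 u A e1 e0 HA.
case: (leP 1 rho) => rho1.
  have := Ht 1%N isT; rewrite /psum big_geq // subr0 powR1 mulr1 => H.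
  apply: (le_trans H).
  have p1 : 1 <= rho `^ (1 - r).
    by rewrite -[X in X <= _](powRr0 rho); apply: pow_mono_exp => //; lra.
  apply: le_trans (_ : B / r + A * (1 + e1^-1) <= _).
    by rewrite lerDr.
  by rewrite -{1}(mulr1 (_ + _)) ler_wpM2l // addr_ge0 // mulr_ge0.
have ri : 1 <= rho^-1 by rewrite invf_ge1 // ltW.
set N := Num.truncn (rho^-1).
have N1 : (1 <= N)%N by rewrite truncn_gt0.
have /andP[NL NU] := truncn_itv (le_trans ler01 ri).
rewrite -/N in NL NU.
have e : limn (psum u) = psum u N.+1 + (limn (psum u) - psum u N.+1) by rewrite addrC subrK.
rewrite e mulrDl; apply: (le_trans (ler_normD _ _)); apply: lerD.
- apply: le_trans (ler_norm_sum _ _ _) _.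
  apply: le_trans (_ : \sum_(1 <= j < N.+1) B * rho * (j%:R : R) `^ (r - 1) <= _).
    rewrite big_nat [X in _ <= X]big_nat; apply: ler_sum => j /andP[j1 _].
    exact: HB.
  rewrite -mulr_sumr.
  apply: le_trans (_ : B * rho * ((N%:R : R) `^ r / r) <= _).
    by rewrite ler_wpM2l ?sumF2 // mulr_ge0 // ltW.
  have h1 : (N%:R : R) `^ r <= rho `^ (- r).
    rewrite -inv_pow //; apply: (ge0_ler_powR (ltW r0)) => //;
      by rewrite nnegrE // ltW // invr_gt0.
  have h2 : rho * rho `^ (- r) = rho `^ (1 - r).
    by rewrite powRD ?powRr1 ?ltW // ; apply/implyP => _; rewrite gt_eqF.
  rewrite -h2.
  have -> : B * rho * ((N%:R : R) `^ r / r) = B / r * (rho * (N%:R : R) `^ r) by ring.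
  by rewrite ler_wpM2l // ler_wpM2l // ltW.
- apply: (le_trans (Ht N.+1 isT)).
  rewrite -mulrA ler_wpM2l // ler_wpM2l //.
  apply: le_trans (_ : (N.+1%:R : R) `^ (- (1 - r)) <= _).
    by apply: pow_mono_exp; [rewrite ler1n | lra].
  rewrite -(opprK (1 - r)) -[X in _ <= X](@inv_pow rho _ rho0) opprK.
  apply: pow_anti; [by rewrite invr_gt0| exact: ltW|lra].
Qed.



Lemma deriv_loc (f f' : R -> R) (x e : R) : has_deriv01 f f' x -> 0 < e ->
  exists2 d : R, 0 < d & forall h, `|h| < d -> in01 (x + h) ->
    `|f (x + h) - f x| <= (`|f' x| + e) * `|h|.
Proof.
move=> H e0; have [d d0 Hd] := H e e0.
exists d => // h hd xh.
have [->|h0] := eqVneq h 0; first by rewrite addr0 subrr normr0 mulr0.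
have Hq := Hd h h0 hd xh.
have -> : f (x + h) - f x = ((f (x + h) - f x) / h - f' x) * h + f' x * h.
  by rewrite mulrBl divfK // subrK.
apply: le_trans (ler_normD _ _) _; rewrite !normrM [(_ + e) * _]mulrDl.
rewrite addrC; apply: lerD => //; rewrite ler_wpM2r //.
Qed.

Lemma mvi_aux (f f' : R -> R) (B eta x y : R) :
  (forall z, in01 z -> has_deriv01 f f' z) -> (forall z, in01 z -> `|f' z| <= B) ->
  0 < eta -> in01 x -> in01 y -> x <= y ->
  `|f y - f x| <= (B + eta) * (y - x).
Proof.
move=> Hd HB eta0 /andP[x0 x1] /andP[y0 y1] xy.
pose S := [set z : R | x <= z <= y /\ `|f z - f x| <= (B + eta) * (z - x)].
have Sx : S x by split; [rewrite lexx xy | rewrite !subrr normr0 mulr0].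
have hs : has_sup S.
  split; first by exists x.
  by exists y => z [/andP[_ zy] _].
set c := sup S.
have xc : x <= c by apply: sup_upper_bound.
have cy : c <= y by apply: ge_sup; [exists x | move=> z [/andP[_ zy] _]].
have c01 : in01 c by apply/andP; split; [exact: le_trans xc | exact: le_trans y1].
have [d d0 Hdc] := @deriv_loc f f' c eta (Hd c c01) eta0.
have HBc : forall h, `|h| < d -> in01 (c + h) -> `|f (c + h) - f c| <= (B + eta) * `|h|.
  move=> h hd ch; apply: (le_trans (Hdc h hd ch)).
  by rewrite ler_wpM2r // lerD2r HB.
have Sc : S c.
  case: (eqVneq c x) => [->//|cx].
  have cx' : x < c by rewrite lt_neqAle eq_sym cx xc.
  have m1 : Num.min d (c - x) <= d by rewrite ge_min lexx.
  have m2 : Num.min d (c - x) <= c - x by rewrite ge_min lexx orbT.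
  have m0 : 0 < Num.min d (c - x) by rewrite lt_min d0 subr_gt0 cx'.
  have ep : 0 < Num.min d (c - x) / 2 by lra.
  have [w [/andP[xw wy] Hw] cw] := sup_adherent ep hs.
  rewrite -/c in cw.
  have wc : w <= c by apply: sup_upper_bound => //; split => //; apply/andP.
  split; first by rewrite xc cy.
  have hd : `|w - c| < d.
    rewrite ler0_norm ?subr_le0 // opprB; lra.
  have w01 : in01 (c + (w - c)) by rewrite [c + _]addrC subrK; apply/andP; split; lra.
  have wc0 : w - c <= 0 by rewrite subr_le0.
  have := HBc _ hd w01; rewrite [c + _]addrC subrK (ler0_norm wc0) opprB => H1.
  rewrite -(subrK (f w) (f c)) -addrA; apply: le_trans (ler_normD _ _) _.
  have -> : (B + eta) * (c - x) = (B + eta) * (c - w) + (B + eta) * (w - x) by ring.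
  by apply: lerD => //; rewrite distrC.
have cy' : c = y.
  apply/eqP; rewrite eq_le cy /=; rewrite leNgt; apply/negP => cy'.
  have m1 : Num.min d (y - c) <= d by rewrite ge_min lexx.
  have m2 : Num.min d (y - c) <= y - c by rewrite ge_min lexx orbT.
  have m0 : 0 < Num.min d (y - c) by rewrite lt_min d0 subr_gt0 cy'.
  set h := Num.min d (y - c) / 2.
  have ep : 0 < h by rewrite /h; lra.
  have hd : `|h| < d by rewrite gtr0_norm // /h; lra.
  have hy : h < y - c by rewrite /h; lra.
  have ch01 : in01 (c + h) by apply/andP; split; lra.
  have Sch : S (c + h).
    split; first by apply/andP; split; lra.
    have := HBc _ hd ch01; rewrite (gtr0_norm ep) => H1.
    case: Sc => _ H2.
    rewrite -(subrK (f c) (f (c + h))) -addrA; apply: le_trans (ler_normD _ _) _.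
    have -> : (B + eta) * (c + h - x) = (B + eta) * h + (B + eta) * (c - x) by ring.
    exact: lerD.
  have := sup_upper_bound hs Sch; rewrite -/c; lra.
by case: Sc; rewrite cy'.
Qed.

Lemma mvi (f f' : R -> R) (B x y : R) :
  (forall z, in01 z -> has_deriv01 f f' z) -> (forall z, in01 z -> `|f' z| <= B) ->
  in01 x -> in01 y -> `|f y - f x| <= B * `|y - x|.
Proof.
move=> Hd HB.
suff H : forall x y, in01 x -> in01 y -> x <= y -> `|f y - f x| <= B * `|y - x|.
  move=> x01 y01; case: (leP x y) => xy; first exact: H.
  by rewrite distrC [`|y - x|]distrC; apply: H => //; exact: ltW.
move=> {}x {}y x01 y01 xy.
case: (eqVneq x y) => [->|xy']; first by rewrite !subrr normr0 mulr0.
have yx0 : 0 < y - x by rewrite subr_gt0 lt_neqAle xy' xy.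
rewrite [`|y - x|]ger0_norm; last exact: ltW.
apply/ler_addgt0Pr => e e0.
have := @mvi_aux f f' B (e / (y - x)) x y Hd HB (divr_gt0 e0 yx0) x01 y01 xy.
by rewrite mulrDl divfK ?gt_eqF.
Qed.



Lemma hd_ext (f g f' g' : R -> R) x : f =1 g -> f' =1 g' ->
  has_deriv01 f f' x -> has_deriv01 g g' x.
Proof.
move=> fg fg' H e e0; have [d d0 Hd] := H e e0; exists d => // h h0 hd xh.
by rewrite -!fg -fg'; apply: Hd.
Qed.

Lemma hd_zero x : has_deriv01 (fun _ : R => 0) (fun _ => 0) x.
Proof.
by move=> e e0; exists 1 => // h _ _ _; rewrite subrr mul0r subrr normr0 ltW.
Qed.

Lemma hd_add (f g f' g' : R -> R) x : has_deriv01 f f' x -> has_deriv01 g g' x ->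
  has_deriv01 (fun u => f u + g u) (fun u => f' u + g' u) x.
Proof.
move=> Hf Hg e e0.
have e2 : 0 < e / 2 by rewrite divr_gt0.
have [d1 d10 H1] := Hf _ e2; have [d2 d20 H2] := Hg _ e2.
exists (Num.min d1 d2); first by rewrite lt_min d10 d20.
move=> h h0; rewrite lt_min => /andP[hd1 hd2] xh.
have -> : (f (x + h) + g (x + h) - (f x + g x)) / h - (f' x + g' x)
  = ((f (x + h) - f x) / h - f' x) + ((g (x + h) - g x) / h - g' x).
  by rewrite !mulrBl; ring.
apply: le_trans (ler_normD _ _) _.
have -> : e = e / 2 + e / 2 by rewrite -splitr.
by apply: lerD; [apply: H1 | apply: H2].
Qed.

Lemma hd_scale (f f' : R -> R) k x : has_deriv01 f f' x ->
  has_deriv01 (fun u => k * f u) (fun u => k * f' u) x.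
Proof.
move=> Hf e e0.
have e1 : 0 < e / (`|k| + 1) by rewrite divr_gt0 // ltr_wpDl.
have [d d0 H] := Hf _ e1; exists d => // h h0 hd xh.
have -> : (k * f (x + h) - k * f x) / h - k * f' x
  = k * ((f (x + h) - f x) / h - f' x) by rewrite !mulrBl; ring.
rewrite normrM.
apply: le_trans (_ : `|k| * (e / (`|k| + 1)) <= _).
  by apply: ler_wpM2l => //; apply: H.
rewrite mulrA ler_pdivrMr ?ltr_wpDl // mulrC ler_wpM2l ?ltW //.
by rewrite ltrDl.
Qed.

Lemma hd_psum (F F' : nat -> R -> R) x :
  (forall j, (1 <= j)%N -> has_deriv01 (F j) (F' j) x) ->
  forall N, has_deriv01 (fun u => psum (fun j => F j u) N) (fun u => psum (fun j => F' j u) N) x.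
Proof.
move=> H; elim => [|N IH].
  by apply: (@hd_ext _ _ _ _ x _ _ (hd_zero x)) => u; rewrite /psum big_geq.
case: N IH => [|N] IH.
  by apply: (@hd_ext _ _ _ _ x _ _ (hd_zero x)) => u; rewrite /psum big_geq.
apply: (@hd_ext _ _ _ _ x _ _ (@hd_add _ _ _ _ x IH (H N.+1 isT))) => u;
  by rewrite /psum [in RHS]big_nat_recr.
Qed.

Lemma small_N (e K eps : R) : 0 < e -> 0 <= K -> 0 < eps ->
  exists N : nat, (1 <= N)%N /\ K * ((1 + e^-1) * (N%:R : R) `^ (- e)) <= eps.
Proof.
move=> e0 K0 eps0.
have T0 : 0 <= 1 + e^-1 by apply: addr_ge0 => //; rewrite invr_ge0 ltW.
set K' := K * (1 + e^-1) + 1.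
have K'0 : 0 < K' by rewrite /K' ltr_wpDl // mulr_ge0.
set y := (K' / eps) `^ (e^-1).
have y0 : 0 <= y by apply: powR_ge0.
exists (Num.truncn y).+1; split => //.
set N := (Num.truncn y).+1.
have yN : y <= N%:R by rewrite ltW // truncnS_gt.
have N0 : (0 : R) < N%:R by rewrite ltr0n.
have NE : K' / eps <= (N%:R : R) `^ e.
  have -> : K' / eps = y `^ e.
    rewrite /y -powRrM mulVf ?gt_eqF // powRr1 //.
    by rewrite divr_ge0 // ltW.
  by apply: (ge0_ler_powR (ltW e0)) => //; rewrite nnegrE ltW.
rewrite powRN mulrA.
apply: le_trans (_ : K' * ((N%:R : R) `^ e)^-1 <= _).
  rewrite ler_wpM2r ?invr_ge0 ?powR_ge0 //.
  by rewrite /K' lerDl.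
rewrite ler_pdivrMr ?powR_gt0 //.
by rewrite -ler_pdivrMl // mulrC.
Qed.

Lemma series_deriv (F F' : nat -> R -> R) (A B e x : R) : 0 < e ->
  (forall j, (1 <= j)%N -> forall z, in01 z -> has_deriv01 (F j) (F' j) z) ->
  (forall j, (1 <= j)%N -> forall z, in01 z -> `|F j z| <= A * (j%:R : R) `^ (-1 - e)) ->
  (forall j, (1 <= j)%N -> forall z, in01 z -> `|F' j z| <= B * (j%:R : R) `^ (-1 - e)) ->
  in01 x ->
  has_deriv01 (fun z => limn (psum (fun j => F j z))) (fun z => limn (psum (fun j => F' j z))) x.
Proof.
move=> e0 Hd HA HB x01 eps eps0.
have B0 : 0 <= B.
  have := HB 1%N isT x x01; rewrite powR1 mulr1 => H.
  exact: le_trans (normr_ge0 _) H.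
have eps3 : 0 < eps / 3 by rewrite divr_gt0.
have [N [N1 HN]] := @small_N e B (eps / 3) e0 B0 eps3.
have [d d0 Hd1] := @hd_psum F F' x (fun j j1 => Hd j j1 x x01) N (eps / 3) eps3.
exists d => // h h0 hd xh.
have [cFh _] := @G1 (fun j => F j (x + h)) A e e0 (fun j j1 => HA j j1 _ xh).
have [cFx _] := @G1 (fun j => F j x) A e e0 (fun j j1 => HA j j1 _ x01).
have [_ tG] := @G1 (fun j => F' j x) B e e0 (fun j j1 => HB j j1 _ x01).
have Hu : forall j, (1 <= j)%N -> `|F j (x + h) - F j x| <= (B * `|h|) * (j%:R : R) `^ (-1 - e).
  move=> j j1.
  have := @mvi (F j) (F' j) (B * (j%:R : R) `^ (-1 - e)) x (x + h) (Hd j j1)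
    (HB j j1) x01 xh.
  have -> : x + h - x = h by ring.
  by rewrite mulrAC.
have [_ tu] := @G1 (fun j => F j (x + h) - F j x) (B * `|h|) e e0 Hu.
rewrite -(@lim_psumB _ _ cFh cFx).
set a := limn _.
set g := limn (psum (fun j => F' j x)).
set p := psum (fun j => F j (x + h) - F j x) N.
set q := psum (fun j => F' j x) N.
have Hp : p = psum (fun j => F j (x + h)) N - psum (fun j => F j x) N.
  by rewrite /p psumB.
have H1 := Hd1 h h0 hd xh; rewrite /= -Hp -/q in H1.
have H2 := tu N N1; rewrite -/a -/p in H2.
have H3 := tG N N1; rewrite -/g -/q in H3.
have -> : a / h - g = (p / h - q) + (a - p) / h - (g - q) by ring.
set T := (1 + e^-1) * (N%:R : R) `^ (- e) in HN H2 H3.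
have H2' : `|(a - p) / h| <= B * T.
  rewrite normrM normfV ler_pdivrMr ?normr_gt0 //.
  by rewrite mulrAC.
apply: le_trans (ler_normB _ _) _.
apply: le_trans (lerD (ler_normD _ _) (lexx _)) _.
have -> : eps = eps / 3 + eps / 3 + eps / 3 by field.
apply: lerD; first by apply: lerD => //; exact: le_trans HN.
exact: le_trans HN.
Qed.


Lemma powD' (x p q : R) : 0 < x -> x `^ (p + q) = x `^ p * x `^ q.
Proof. by move=> x0; rewrite powRD //; apply/implyP => _; rewrite gt_eqF. Qed.

Lemma dist_ge1 (s t s' t' : R) : `|s - s'| <= dist2 s t s' t'.
Proof.
rewrite /dist2 -sqrtr_sqr ler_sqrt ?addr_ge0 ?sqr_ge0 //.
by rewrite lerDl sqr_ge0.
Qed.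

Lemma dist_ge2 (s t s' t' : R) : `|t - t'| <= dist2 s t s' t'.
Proof.
rewrite /dist2 -sqrtr_sqr ler_sqrt ?addr_ge0 ?sqr_ge0 //.
by rewrite lerDr sqr_ge0.
Qed.

Section Kernel.
Variables (psi : nat -> R -> R) (dpsi : nat -> nat -> R -> R) (lam : nat -> R)
  (vs c gamma : R) (m : nat) (M : nat -> R).
Hypothesis Htow : forall j, (0 < j)%N -> deriv_tower01 (psi j) (dpsi j).
Hypothesis Hlam : forall j, (0 < j)%N -> 0 < lam j.
Hypothesis HM0 : forall l, 0 < M l.
Hypothesis HM : forall l j, (0 < j)%N -> forall u, 0 <= u <= 1 ->
  `|dpsi j l u| <= M l * (j%:R : R) `^ (l%:R + vs).
Hypothesis Hc : 0 < c.
Hypothesis Hdec : forall j, (0 < j)%N -> lam j <= c * (j%:R : R) `^ (- (gamma + 1)).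

Let alpha := gamma - 2 * vs.

Definition T a b j (s t : R) := lam j * dpsi j a s * dpsi j b t.
Definition D a b (s t : R) := limn (psum (fun j => T a b j s t)).
Definition C0 a b := c * M a * M b.
Definition C1 a b := c * (M a.+1 * M b + M a * M b.+1).

Lemma C0_ge0 a b : 0 <= C0 a b.
Proof. by rewrite /C0 !mulr_ge0 // ltW. Qed.

Lemma C1_ge0 a b : 0 <= C1 a b.
Proof. by rewrite /C1 mulr_ge0 ?addr_ge0 ?mulr_ge0 // ltW. Qed.

Lemma dpsi_lip j l u v : (0 < j)%N -> in01 u -> in01 v ->
  `|dpsi j l u - dpsi j l v| <= M l.+1 * (j%:R : R) `^ (l.+1%:R + vs) * `|u - v|.
Proof.
move=> j0 u01 v01.
apply: (@mvi (dpsi j l) (dpsi j l.+1)) => //.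
- by move=> z z01; exact: ((Htow j j0).2 l z z01).
- by move=> z z01; exact: HM.
Qed.

Lemma T_bound a b j s t : (0 < j)%N -> in01 s -> in01 t ->
  `|T a b j s t| <= C0 a b * (j%:R : R) `^ (-1 - (alpha - (a + b)%:R)).
Proof.
move=> j0 s01 t01.
have jr : (0 : R) < j%:R by rewrite ltr0n.
rewrite /T !normrM (ger0_norm (ltW (Hlam j j0))).
apply: le_trans (_ : c * (j%:R : R) `^ (- (gamma + 1)) *
   (M a * (j%:R : R) `^ (a%:R + vs)) * (M b * (j%:R : R) `^ (b%:R + vs)) <= _).
  have l0 := ltW (Hlam j j0).
  apply: ler_pM; [exact: mulr_ge0 l0 (normr_ge0 _) | exact: normr_ge0 | | exact: HM].
  apply: ler_pM; [exact: l0 | exact: normr_ge0 | exact: Hdec | exact: HM].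
rewrite /C0.
have -> : c * (j%:R : R) `^ (- (gamma + 1)) * (M a * (j%:R : R) `^ (a%:R + vs)) *
    (M b * (j%:R : R) `^ (b%:R + vs)) =
  c * M a * M b * ((j%:R : R) `^ (- (gamma + 1)) * ((j%:R : R) `^ (a%:R + vs) *
    (j%:R : R) `^ (b%:R + vs))) by ring.
rewrite -!powD' //.
have -> : - (gamma + 1) + (a%:R + vs + (b%:R + vs)) = -1 - (alpha - (a + b)%:R).
  by rewrite /alpha natrD; ring.
by [].
Qed.

Lemma Tdiff_bound a b j s t s' t' : (0 < j)%N -> in01 s -> in01 t -> in01 s' -> in01 t' ->
  `|T a b j s t - T a b j s' t'| <=
    C1 a b * dist2 s t s' t' * (j%:R : R) `^ (- (alpha - (a + b)%:R)).
Proof.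
move=> j0 s01 t01 s01' t01'.
have jr : (0 : R) < j%:R by rewrite ltr0n.
set rho := dist2 s t s' t'.
set x := dpsi j a s; set x' := dpsi j a s'; set y := dpsi j b t; set y' := dpsi j b t'.
have -> : T a b j s t - T a b j s' t' = lam j * ((x - x') * y + x' * (y - y')).
  by rewrite /T -/x -/x' -/y -/y'; ring.
set P := (j%:R : R) `^ (- (gamma + 1)).
set Pa := (j%:R : R) `^ (a%:R + vs); set Pa1 := (j%:R : R) `^ (a.+1%:R + vs).
set Pb := (j%:R : R) `^ (b%:R + vs); set Pb1 := (j%:R : R) `^ (b.+1%:R + vs).
have hx : `|x - x'| <= M a.+1 * Pa1 * rho.
  apply: le_trans (@dpsi_lip j a s s' j0 s01 s01') _.
  by apply: ler_wpM2l; [exact: mulr_ge0 (ltW (HM0 _)) (powR_ge0 _ _) | exact: dist_ge1].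
have hy : `|y - y'| <= M b.+1 * Pb1 * rho.
  apply: le_trans (@dpsi_lip j b t t' j0 t01 t01') _.
  by apply: ler_wpM2l; [exact: mulr_ge0 (ltW (HM0 _)) (powR_ge0 _ _) | exact: dist_ge2].
have rho0 : 0 <= rho by apply: le_trans (dist_ge1 _ t _ t').
rewrite normrM (ger0_norm (ltW (Hlam j j0))).
apply: le_trans (_ : (c * P) * ((M a.+1 * Pa1 * rho) * (M b * Pb) +
                                (M a * Pa) * (M b.+1 * Pb1 * rho)) <= _).
  apply: ler_pM; [exact: ltW (Hlam j j0) | exact: normr_ge0 | exact: Hdec | ].
  apply: le_trans (ler_normD _ _) _; rewrite !normrM.
  apply: lerD.
  - by apply: ler_pM; [exact: normr_ge0 | exact: normr_ge0 | exact: hx | exact: HM].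
  - by apply: ler_pM; [exact: normr_ge0 | exact: normr_ge0 | exact: HM | exact: hy].
have E1 : P * (Pa1 * Pb) = (j%:R : R) `^ (- (alpha - (a + b)%:R)).
  rewrite /P /Pa1 /Pb -!powD' //; congr (_ `^ _).
  by rewrite /alpha natrD -natr1; ring.
have E2 : P * (Pa * Pb1) = (j%:R : R) `^ (- (alpha - (a + b)%:R)).
  rewrite /P /Pa /Pb1 -!powD' //; congr (_ `^ _).
  by rewrite /alpha natrD -natr1; ring.
have -> : c * P * (M a.+1 * Pa1 * rho * (M b * Pb) + M a * Pa * (M b.+1 * Pb1 * rho))
  = c * M a.+1 * M b * rho * (P * (Pa1 * Pb)) + c * M a * M b.+1 * rho * (P * (Pa * Pb1))
  by ring.
rewrite E1 E2 /C1 le_eqVlt; apply/orP; left; apply/eqP; ring.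
Qed.

Hypothesis Halpha : m%:R < alpha.

Lemma T_bound' a b j s t e : (0 < j)%N -> in01 s -> in01 t -> e <= alpha - (a + b)%:R ->
  `|T a b j s t| <= C0 a b * (j%:R : R) `^ (-1 - e).
Proof.
move=> j0 s01 t01 ee.
apply: le_trans (T_bound a b j s t j0 s01 t01) _.
apply: ler_wpM2l; first exact: C0_ge0.
by apply: pow_mono_exp; [rewrite ler1n | lra].
Qed.

Definition Lab (th : R) a b := C1 a b / (1 - th) + 2 * C0 a b * (1 + (alpha - (a + b)%:R)^-1).

Lemma Lab_ge0 th a b : th < 1 -> (a + b <= m)%N -> 0 <= Lab th a b.
Proof.
move=> th1 abm.
have e1 : 0 < alpha - (a + b)%:R.
  by rewrite subr_gt0; apply: le_lt_trans Halpha; rewrite ler_nat.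
apply: addr_ge0.
  by apply: divr_ge0; [exact: C1_ge0 | lra].
apply: mulr_ge0; first by apply: mulr_ge0 => //; exact: C0_ge0.
by apply: addr_ge0 => //; rewrite invr_ge0 ltW.
Qed.

Lemma holder_ab th a b s t s' t' : 0 < th -> th < 1 -> th <= alpha - m%:R ->
  (a + b <= m)%N -> in01 s -> in01 t -> in01 s' -> in01 t' ->
  `|D a b s t - D a b s' t'| <= Lab th a b * dist2 s t s' t' `^ th.
Proof.
move=> th0 th1 thm abm s01 t01 s01' t01'.
set e1 := alpha - (a + b)%:R.
have abm' : ((a + b)%:R : R) <= m%:R by rewrite ler_nat.
have e10 : 0 < e1 by rewrite /e1; lra.
have the : th <= e1 by rewrite /e1; lra.
set rho := dist2 s t s' t'.
have rho0 : 0 <= rho by apply: le_trans (dist_ge1 _ t _ t').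
have L0 := Lab_ge0 th a b th1 abm.
case: (eqVneq rho 0) => [r0|rn0].
  have ss : s = s'.
    by apply/eqP; rewrite -subr_eq0 -normr_le0 -r0 dist_ge1.
  have tt : t = t'.
    by apply/eqP; rewrite -subr_eq0 -normr_le0 -r0 (dist_ge2 s _ s').
  rewrite ss tt subrr normr0; apply: mulr_ge0 => //; exact: powR_ge0.
have rhop : 0 < rho by rewrite lt_neqAle eq_sym rn0.
have [c1 _] := @G1 (fun j => T a b j s t) (C0 a b) e1 e10
  (fun j j0 => T_bound a b j s t j0 s01 t01).
have [c2 _] := @G1 (fun j => T a b j s' t') (C0 a b) e1 e10
  (fun j j0 => T_bound a b j s' t' j0 s01' t01').
rewrite /D -(@lim_psumB _ _ c1 c2).
rewrite /Lab -/e1 [X in _ `^ X](_ : th = 1 - (1 - th)); last by ring.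
apply: (@split_bound _ (2 * C0 a b) (C1 a b) (1 - th) e1 rho) => //.
- lra.
- lra.
- lra.
- exact: C1_ge0.
- move=> j j0; apply: le_trans (ler_normB _ _) _.
  have -> : 2 * C0 a b * (j%:R : R) `^ (-1 - e1) =
    C0 a b * (j%:R : R) `^ (-1 - e1) + C0 a b * (j%:R : R) `^ (-1 - e1) by ring.
  by apply: lerD; apply: T_bound.
- move=> j j0; apply: le_trans (Tdiff_bound a b j s t s' t' j0 s01 t01 s01' t01') _.
  apply: ler_wpM2l; first by apply: mulr_ge0 => //; exact: C1_ge0.
  by apply: pow_mono_exp; [rewrite ler1n | rewrite -/e1; lra].
Qed.

Lemma cont_ab th a b : 0 < th -> th < 1 -> th <= alpha - m%:R ->
  (a + b <= m)%N -> continuous_on_sq (D a b).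
Proof.
move=> th0 th1 thm abm s t s01 t01 e e0.
set L := Lab th a b.
have L0 : 0 <= L := Lab_ge0 th a b th1 abm.
have q0 : 0 < e / (L + 1) by apply: divr_gt0 => //; lra.
exists ((e / (L + 1)) `^ (th^-1)); first exact: powR_gt0.
move=> s' t' s01' t01' hd.
rewrite distrC.
apply: le_lt_trans (holder_ab th a b s t s' t' th0 th1 thm abm s01 t01 s01' t01') _.
have h1 : dist2 s t s' t' `^ th < e / (L + 1).
  have -> : e / (L + 1) = ((e / (L + 1)) `^ (th^-1)) `^ th.
    by rewrite -powRrM mulVf ?gt_eqF // powRr1 // ltW.
  apply: (gt0_ltr_powR th0) => //; rewrite nnegrE.
    exact: le_trans (dist_ge1 _ t _ t').
  exact: powR_ge0.
apply: le_lt_trans (_ : L * (e / (L + 1)) < e).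
  by apply: ler_wpM2l => //; exact: ltW.
rewrite mulrA ltr_pdivrMr; last by lra.
by rewrite mulrC ltr_pM2l //; lra.
Qed.

Lemma deriv_s a b s t : (a + b < m)%N -> in01 s -> in01 t ->
  has_deriv01 (fun u => D a b u t) (fun u => D a.+1 b u t) s.
Proof.
move=> abm s01 t01.
have ab1 : ((a.+1 + b)%:R : R) <= m%:R by rewrite ler_nat addSn.
have ab0 : ((a + b)%:R : R) <= (a.+1 + b)%:R by rewrite ler_nat addSn.
have e0 : 0 < alpha - (a.+1 + b)%:R by have := Halpha; lra.
apply: (@series_deriv (fun j u => T a b j u t) (fun j u => T a.+1 b j u t)
  (C0 a b) (C0 a.+1 b) (alpha - (a.+1 + b)%:R) s e0) => //.
- move=> j j0 z z01.
  apply: (@hd_ext (fun u => (lam j * dpsi j b t) * dpsi j a u) _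
     (fun u => (lam j * dpsi j b t) * dpsi j a.+1 u)).
  + by move=> u; rewrite /T; ring.
  + by move=> u; rewrite /T; ring.
  exact: hd_scale ((Htow j j0).2 a z z01).
- move=> j j0 z z01; apply: T_bound' => //; lra.
- by move=> j j0 z z01; apply: T_bound.
Qed.

Lemma deriv_t a b s t : (a + b < m)%N -> in01 s -> in01 t ->
  has_deriv01 (fun v => D a b s v) (fun v => D a b.+1 s v) t.
Proof.
move=> abm s01 t01.
have ab1 : ((a + b.+1)%:R : R) <= m%:R by rewrite ler_nat addnS.
have ab0 : ((a + b)%:R : R) <= (a + b.+1)%:R by rewrite ler_nat addnS.
have e0 : 0 < alpha - (a + b.+1)%:R by have := Halpha; lra.
apply: (@series_deriv (fun j v => T a b j s v) (fun j v => T a b.+1 j s v)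
  (C0 a b) (C0 a b.+1) (alpha - (a + b.+1)%:R) t e0) => //.
- move=> j j0 z z01.
  apply: (@hd_ext (fun v => (lam j * dpsi j a s) * dpsi j b v) _
     (fun v => (lam j * dpsi j a s) * dpsi j b.+1 v)).
  + by move=> u; rewrite /T; ring.
  + by move=> u; rewrite /T; ring.
  exact: hd_scale ((Htow j j0).2 b z z01).
- move=> j j0 z z01; apply: T_bound' => //; lra.
- by move=> j j0 z z01; apply: T_bound.
Qed.

Lemma D00 s t : in01 s -> in01 t ->
  D 0 0 s t = limn (fun n => \sum_(1 <= j < n) lam j * psi j s * psi j t).
Proof.
move=> s01 t01; rewrite /D; congr (limn _); apply/funext => n.
rewrite /psum /T; apply: eq_big_nat => j /andP[j0 _].
by rewrite !((Htow j j0).1 _ s01) ((Htow j j0).1 _ t01).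
Qed.

Lemma holder_main th : 0 < th -> th < 1 -> th <= alpha - m%:R ->
  holder_class m th (fun s t => limn (fun n => \sum_(1 <= j < n) lam j * psi j s * psi j t)).
Proof.
move=> th0 th1 thm.
exists D; split.
- exact: D00.
- move=> a b abm s t s01 t01; split; [exact: deriv_s | exact: deriv_t].
- by move=> a b abm; apply: (@cont_ab th).
- exists (\sum_(i < m.+1) Lab th i (m - i) + 1).
    by rewrite ltr_wpDl // sumr_ge0 // => i _; apply: Lab_ge0 => //; rewrite subnKC // -ltnS.
  move=> a b abm s t s' t' s01 t01 s01' t01'.
  have am : (a < m.+1)%N by rewrite ltnS -abm leq_addr.
  have bE : b = (m - a)%N by rewrite -abm addKn.
  apply: le_trans (holder_ab th a b s t s' t' th0 th1 thm _ s01 t01 s01' t01') _.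
    by rewrite abm.
  apply: ler_wpM2r; first exact: powR_ge0.
  rewrite (bigD1 (Ordinal am)) //= -bE -addrA lerDl.
  apply: addr_ge0 => //; apply: sumr_ge0 => i _; apply: Lab_ge0 => //.
  by rewrite subnKC // -ltnS.
Qed.

End Kernel.

End Main.

Theorem mainTheorem11 (R : realType)
  (psi : nat -> R -> R) (dpsi : nat -> nat -> R -> R) (lam : nat -> R)
  (vs c gamma : R) (m : nat) :
  (* each psi_j is infinitely differentiable on [0,1], with derivatives dpsi j l *)
  (forall j, (0 < j)%N -> deriv_tower01 (psi j) (dpsi j)) ->
  (* orthonormality in L^2([0,1]) *)
  (forall i j, (0 < i)%N -> (0 < j)%N ->
     (\int[lebesgue_measure]_(x in `[0%R, 1%R]) (psi i x * psi j x)%:E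
        = ((i == j)%:R)%:E)%E) ->
  (* completeness: only the zero element of L^2([0,1]) is orthogonal to all psi_j *)
  (forall f : R -> R, measurable_fun (`[0%R, 1%R]%classic : set R) f ->
     (\int[lebesgue_measure]_(x in `[0%R, 1%R]) ((f x) ^+ 2)%:E < +oo)%E ->
     (forall j, (0 < j)%N ->
        (\int[lebesgue_measure]_(x in `[0%R, 1%R]) (f x * psi j x)%:E = 0)%E) ->
     ae_eq lebesgue_measure (`[0%R, 1%R]%classic : set R) f (fun _ => 0)) ->
  (* (lam_j) positive and summable *)
  (forall j, (0 < j)%N -> 0 < lam j) ->
  cvgn (fun n => \sum_(1 <= j < n) lam j) ->
  (* derivative bounds *)
  0 <= vs ->
  (forall l : nat, exists2 M : R, 0 < M &
     forall j, (0 < j)%N -> forall u, 0 <= u <= 1 ->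
       `|dpsi j l u| <= M * (j%:R) `^ (l%:R + vs)) ->
  (* eigenvalue decay *)
  0 < c -> 0 < gamma ->
  (forall j, (0 < j)%N -> lam j <= c * (j%:R) `^ (- (gamma + 1))) ->
  (* alpha := gamma - 2 vs > 0, m := max {k in Z | k < alpha} *)
  0 < gamma - 2 * vs ->
  m%:R < gamma - 2 * vs <= m.+1%:R ->
  let alpha := gamma - 2 * vs in
  let beta := alpha - m%:R in
  let K := fun s t : R => limn (fun n => \sum_(1 <= j < n) lam j * psi j s * psi j t) in
  (alpha \isn't a Num.int -> holder_class m beta K) /\
  (alpha \is a Num.int -> forall delta : R, 0 < delta < 1 -> holder_class m delta K).
Proof.
move=> Htow _ _ Hlam _ Hvs HM Hc _ Hdec _ /andP[Hm1 Hm2] alpha beta K.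
have /choice [M HMf] : forall l : nat, exists M : R, 0 < M /\
    forall j, (0 < j)%N -> forall u, 0 <= u <= 1 ->
      `|dpsi j l u| <= M * (j%:R) `^ (l%:R + vs).
  by move=> l; have [M M0 HMl] := HM l; exists M.
have HM0 : forall l, 0 < M l by move=> l; exact: (HMf l).1.
have HM' : forall l j, (0 < j)%N -> forall u, 0 <= u <= 1 ->
    `|dpsi j l u| <= M l * (j%:R) `^ (l%:R + vs) by move=> l; exact: (HMf l).2.
have H := @holder_main R psi dpsi lam vs c gamma m M Htow Hlam HM0 HM' Hc Hdec Hm1.
split.
- move=> nint.
  have b1 : beta < 1.
    rewrite lt_neqAle; apply/andP; split; last by rewrite /beta /alpha; lra.
    apply/eqP => hb; move/negP: nint; apply.
    have -> : alpha = m.+1%:R by rewrite -natr1; move: hb; rewrite /beta; lra.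
    exact: natr_int.
  by apply: H => //; rewrite /beta /alpha; lra.
- move=> isint delta /andP[d0 d1].
  have hi : alpha - m%:R \is a Num.int by rewrite rpredB // natr_int.
  have h1 : 1 <= alpha - m%:R.
    have := norm_intr_ge1 hi; rewrite gtr0_norm; last by rewrite /alpha; lra.
    apply; rewrite gt_eqF //; rewrite /alpha; lra.
  by apply: H => //; move: h1; rewrite /alpha; lra.
Qed.
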